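(* Let $f\colon[0,1]\to\mathbb{R}$ be continuous. For natural $n$ let $x_n:=\sum_{k=1}^{n-1} f\big(\tfrac kn\big)$ and $y_n:=x_{n+1}-x_n$. If $\lim_{n\to\infty} y_n$ exists, then $\lim_{n\to\infty} y_n=\int_0^1 f(x)\,dx$. *)

(* Defs.v *)
From Stdlib Require Import Reals.
From Coquelicot Require Import Coquelicot.
Open Scope R_scope.

Definition continuous_on_01 (f : R -> R) : Prop :=
  forall x, 0 <= x <= 1 ->
    filterlim f (within (fun y => 0 <= y <= 1) (locally x)) (locally (f x)).

(* x_n = sum_{k=1}^{n-1} f(k/n)  (empty sum = 0 when n <= 1). *)
Definition xseq (f : R -> R) (n : nat) : R :=
  sum_n_m (fun k => f (INR k / INR n)) 1 (n - 1).

Definition yseq (f : R -> R) (n : nat) : R := xseq f (S n) - xseq f n.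

(* Main.v *)
Require Import Defs.
From Stdlib Require Import Reals.
From Coquelicot Require Import Coquelicot.
Open Scope R_scope.
From Stdlib Require Import Lra Lia.
Lemma RS (g : R -> R) (h : nat -> R) : forall m s,
  Riemann_sum g (SF_seq_f2 (fun x y => y) (seq.map h (seq.iota s (S (S m))))) =
  sum_n_m (fun j => (h (S j) - h j) * g (h (S j))) s (s + m).
Proof.
induction m as [|m IH]; intros s.
- rewrite Nat.add_0_r, sum_n_n. change (seq.map h (seq.iota s 2)) with (cons (h s) (cons (h (S s)) nil)).
  rewrite SF_cons_f2 by (simpl; auto). rewrite Riemann_sum_cons. simpl.
  unfold plus, scal, zero; simpl. unfold mult; simpl. unfold Riemann_sum; simpl. unfold zero; simpl. ring.
- change (seq.map h (seq.iota s (S (S (S m))))) with (cons (h s) (seq.map h (seq.iota (S s) (S (S m))))).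
  rewrite SF_cons_f2 by (simpl; auto with arith). rewrite Riemann_sum_cons.
  rewrite IH. rewrite (sum_Sn_m _ s) by lia. replace (S s + m)%nat with (s + S m)%nat by lia.
  simpl. unfold plus, scal; simpl. unfold mult; simpl. reflexivity.
Qed.
Definition clamp (x : R) : R := Rmax 0 (Rmin 1 x).

Lemma clamp_bounds x : 0 <= clamp x <= 1.
Proof. unfold clamp, Rmax, Rmin; repeat destruct Rle_dec; lra. Qed.

Lemma clamp_id x : 0 <= x <= 1 -> clamp x = x.
Proof. intros; unfold clamp, Rmax, Rmin; repeat destruct Rle_dec; lra. Qed.

Lemma clamp_lip x y : Rabs (clamp y - clamp x) <= Rabs (y - x).
Proof.
unfold clamp, Rmax, Rmin; repeat destruct Rle_dec; unfold Rabs;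
repeat destruct Rcase_abs; lra.
Qed.

Lemma g_cont f : continuous_on_01 f -> forall z, continuous (fun x => f (clamp x)) z.
Proof.
intros Hf z. unfold continuous.
apply filterlim_comp with (G := within (fun y => 0 <= y <= 1) (locally (clamp z))).
- intros P [eps HP]. exists eps. intros y Hy. apply HP; [|apply clamp_bounds].
  revert Hy. unfold ball; simpl; unfold AbsRing_ball, abs, minus, plus, opp; simpl.
  pose proof (clamp_lip z y). intros Hy. unfold Rminus in H. lra.
- apply Hf. apply clamp_bounds.
Qed.

Lemma tele f : forall m, sum_f_R0 (yseq f) m = xseq f (S m) - xseq f 0.
Proof.
induction m as [|m IH]; simpl.
- unfold yseq. ring.
- rewrite IH. unfold yseq. ring.
Qed.

Lemma xseq0 f : xseq f 0 = 0.
Proof. unfold xseq. simpl. rewrite sum_n_m_zero by lia. reflexivity. Qed.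

Lemma u_eq f n :
  Riemann_sum (fun x => f (clamp x)) (SF_seq_f2 (fun x y => y) (unif_part 0 1 n))
  = (xseq f (S n) + f 1) / INR (S n).
Proof.
unfold unif_part, seq.mkseq. rewrite RS. simpl (0 + n)%nat.
assert (HS : 0 < INR (S n)) by (apply lt_0_INR; lia).
rewrite (sum_n_m_ext_loc _ (fun j => mult (/ INR (S n)) (f (INR (S j) / INR (S n))))).
2:{ intros k Hk. cbv beta.
    assert (Hk' : INR (S k) <= INR (S n)) by (apply le_INR; lia).
    assert (H0 : 0 <= INR k) by apply pos_INR.
    assert (H1 : 0 <= INR n) by apply pos_INR.
    assert (E1: 0 + INR (S k) * (1-0)/(INR n+1) = INR (S k)/INR (S n))
      by (rewrite (S_INR n); field; lra).
    assert (E2: 0 + INR (S k)*(1-0)/(INR n+1) - (0 + INR k*(1-0)/(INR n+1)) = / INR (S n))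
      by (rewrite (S_INR n), (S_INR k); field; lra).
    rewrite E2, E1. rewrite clamp_id. reflexivity.
    split.
    - apply Rmult_le_pos; [apply pos_INR|]. apply Rlt_le, Rinv_0_lt_compat. lra.
    - apply Rmult_le_reg_r with (INR (S n)); [lra|].
      unfold Rdiv. rewrite Rmult_assoc, Rinv_l by lra. lra. }
rewrite sum_n_m_mult_l.
rewrite (sum_n_m_S (fun k => f (INR k / INR (S n)))).
rewrite sum_n_Sm by lia.
unfold xseq. replace (S n - 1)%nat with n by lia.
replace (INR (S n) / INR (S n)) with 1 by (field; lra).
unfold mult, plus; simpl. unfold Rdiv. apply Rmult_comm.
Qed.

Theorem proposition2 (f : R -> R) (l : R) :
  continuous_on_01 f ->
  is_lim_seq (yseq f) l ->
  l = RInt f 0 1.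
Proof.
intros Hf Hy.
set (g := fun x => f (clamp x)).
assert (Hex : ex_RInt g 0 1).
{ apply (ex_RInt_continuous (V:=R_CompleteNormedModule)). intros; apply g_cont; exact Hf. }
assert (E : RInt f 0 1 = RInt g 0 1).
{ apply RInt_ext. rewrite Rmin_left, Rmax_right by lra. intros x Hx.
  unfold g. rewrite clamp_id by lra. reflexivity. }
rewrite E. set (I := RInt g 0 1).
pose proof (RInt_correct g 0 1 Hex) as HI. fold I in HI.
set (u := fun n => Riemann_sum g (SF_seq_f2 (fun x y => y) (unif_part 0 1 n))).
assert (Hu : is_lim_seq u I).
{ intros P HP. apply HI in HP. destruct HP as [delta Hd].
  destruct (archimed_cor1 delta (cond_pos delta)) as [N [HN HN0]].
  exists N. intros n Hn.
  destruct (Riemann_fine_unif_part (fun x y => y) 0 1 n) as [H1 [H2 [H3 H4]]].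
  { intros; lra. } { lra. }
  specialize (Hd (SF_seq_f2 (fun x y => y) (unif_part 0 1 n))).
  assert (Es : scal (sign (1-0)) (Riemann_sum g (SF_seq_f2 (fun x y => y) (unif_part 0 1 n))) = u n)
    by (rewrite sign_eq_1 by lra; apply Rmult_1_l).
  rewrite <- Es. apply Hd.
  - eapply Rle_lt_trans; [exact H1|]. eapply Rle_lt_trans; [|exact HN].
    assert (0 < INR N) by (apply lt_0_INR; lia).
    assert (INR N <= INR n) by (apply le_INR; lia).
    unfold Rdiv. rewrite Rmult_minus_distr_r, Rmult_1_l, Rmult_0_l, Rminus_0_r.
    apply Rinv_le_contravar; lra.
  - rewrite Rmin_left, Rmax_right by lra. auto. }
assert (Hx : is_lim_seq (fun n => xseq f (S n) / INR (S n)) l).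
{ apply is_lim_seq_Reals in Hy. pose proof (Cesaro_1 _ _ Hy) as C.
  apply is_lim_seq_Reals in C. apply is_lim_seq_incr_1 in C.
  eapply is_lim_seq_ext; [|exact C]. intros n. simpl (Nat.pred (S n)).
  cbv beta. simpl (Nat.pred (S n)). rewrite tele, xseq0. f_equal. ring. }
assert (Hv : is_lim_seq (fun n => / INR (S n)) 0).
{ replace (Finite 0) with (Rbar_inv p_infty) by reflexivity.
  apply is_lim_seq_inv. apply (is_lim_seq_incr_1 INR). apply is_lim_seq_INR.
  discriminate. }
assert (Hw : is_lim_seq u (l + f 1 * 0)).
{ eapply is_lim_seq_ext; [|apply is_lim_seq_plus'; [exact Hx| apply is_lim_seq_mult'; [apply is_lim_seq_const|exact Hv]]].
  intros n. unfold u, g. rewrite u_eq. unfold Rdiv. ring. }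
apply is_lim_seq_unique in Hu. apply is_lim_seq_unique in Hw.
rewrite Hu in Hw. injection Hw. intros; lra.
Qed.
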